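(* Let $G$ be a finite group and $H \leqslant G$ a nilpotent subgroup. If $|HP|$ divides $|G|$ for every Sylow subgroup $P$ of $G$ (for every prime), then $H$ is subnormal in $G$.
   Context: $HP$ denotes the product set $\{hx : h \in H, x \in P\}$. $H$ is subnormal in $G$ if there is a finite chain $H = H_0 \lhd H_1 \lhd \dots \lhd H_r = G$. *)

(* Defs.v *)
From mathcomp Require Import all_boot.
From mathcomp Require Import fingroup morphism pgroup sylow nilpotent gseries.

(* Main.v *)
Require Import Defs.
From mathcomp Require Import all_boot.
From mathcomp Require Import fingroup morphism pgroup sylow nilpotent gseries.
From mathcomp Require Import maximal zify.
Set Implicit Arguments.
Unset Strict Implicit.
Open Scope group_scope.

Lemma core_sub_Syl (gT : finGroupType) (G H P : {group gT}) (p : nat) :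
  nilpotent H -> prime p -> p.-Sylow(G) P -> (#|(H * P)%g| %| #|G|)%N ->
  'O_p(H) \subset P.
Proof.
move=> nilH pp sylP dv.
set K := 'O_p(H).
have hallK : p.-Hall(H) K := nilpotent_pcore_Hall p nilH.
have nKH : K <| H := pcore_normal p H.
set Q := H :&: P.
have pQ : p.-group Q := pgroupS (subsetIr H P) (pHall_pgroup sylP).
have sQK : Q \subset K by rewrite (sub_normal_Hall hallK nKH (subsetIl H P)).
have cK : #|K| = (p ^ logn p #|H|)%N by rewrite (card_Hall hallK) p_part.
have cQ := card_pgroup pQ.
have cP : logn p #|P| = logn p #|G| by rewrite (card_Hall sylP) logn_part.
have hm := mul_cardG H P.
have l1 : logn p #|(H * P)%g| <= logn p #|G| by apply: dvdn_leq_log.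
have l2 : logn p #|H| <= logn p #|Q|.
  have := congr1 (logn p) hm.
  rewrite !lognM ?cardG_gt0 //; last first.
    by rewrite (leq_trans (cardG_gt0 H)) // (subset_leq_card (mulG_subl _ _)).
  rewrite cP => E; rewrite -/Q in E; move: E l1; clear; lia.
have eQK : Q = K :> {set gT}.
  apply/eqP; rewrite eqEcard sQK cK cQ leq_exp2l //; exact: prime_gt1.
by rewrite -eQK subsetIr.
Qed.

Theorem lemma3p6 (gT : finGroupType) (G H : {group gT}) :
  H \subset G -> nilpotent H ->
  (forall (p : nat) (P : {group gT}), prime p -> (P \in 'Syl_p(G))%g ->
     #|(H * P)%g| %| #|G|) ->
  (H <|<| G)%g.
Proof.
move=> sHG nilH hyp.
have sHF : H \subset 'F(G).
  rewrite -{1}(nilpotent_Fitting nilH) FittingEgen gen_subG.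
  apply/bigcupsP=> i piP; move: (nat_of_ord i) piP => p piP.
  have pp : prime p by move: piP; rewrite mem_primes => /andP[].
  apply: subset_trans (_ : 'O_p(G) \subset _); last first.
    by rewrite -p_core_Fitting pcore_sub.
  apply/bigcapsP=> M; rewrite max_pgroup_Sylow => sylM.
  have hM : M \in 'Syl_p(G) by rewrite inE.
  exact: (core_sub_Syl nilH pp sylM (hyp p M pp hM)).
exact: subnormal_trans (nilpotent_subnormal (Fitting_nil G) sHF)
        (normal_subnormal (Fitting_normal G)).
Qed.
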